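(* For each $n\ge1$ and even $h\ge0$, the number $|\mathrm{UMap}(n,\mathbf N_h)|$ of $n$-vertex unicellular maps in $\mathbf N_h$ satisfies $|\mathrm{UMap}(n,\mathbf N_h)|\le c^{n+h}h^h$, where $c=2^7e^{3/2}$.
   Context: A map is a connected pseudograph (loops and multiple edges allowed, not necessarily simple) cellularly embedded in a surface, considered unlabelled and unrooted (up to isomorphism); it is unicellular if it has exactly one face. $\mathbf N_h$ is the non-orientable surface of Euler genus $h$, with $\mathbf N_0$ meaning the sphere. Convention $0^0=1$. *)

(* Defs.v *)
From mathcomp Require Import all_boot all_fingroup.
Set Implicit Arguments. Unset Strict Implicit. Unset Printing Implicit Defensive.

Local Open Scope group_scope.

(* A map with m >= 1 edges is encoded by its 4m flags, identified with
   'I_(4*m), and three fixed-point-free involutions r0 r1 r2 (the standard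
   combinatorial encoding of maps on arbitrary, possibly non-orientable,
   closed surfaces; loops and multiple edges allowed):
   r0 r2 commute and r0*r2 is fixed-point-free, and <r0,r1,r2> is transitive.
   vertices = orbits of <r1,r2>, edges = orbits of <r0,r2>,
   faces = orbits of <r0,r1>. *)
Definition flags (m : nat) := {perm 'I_(4 * m)}.
Definition triple (m : nat) := (flags m * flags m * flags m)%type.

Section MapDefs.
Variable m : nat.
Implicit Type t : triple m.

Definition r0 t := t.1.1.
Definition r1 t := t.1.2.
Definition r2 t := t.2.

Definition fpf_invol (r : flags m) : bool :=
  (r * r == 1) && [forall x, r x != x].

Definition n_orbits (G : {set flags m}) : nat :=
  #|[set orbit 'P G x | x : 'I_(4 * m)]|.

Definition is_map t : bool :=
  [&& fpf_invol (r0 t), fpf_invol (r1 t), fpf_invol (r2 t),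
      r0 t * r2 t == r2 t * r0 t,
      [forall x, (r0 t * r2 t) x != x] &
      [forall x, forall y, y \in orbit 'P <<[set r0 t; r1 t; r2 t]>> x]].

Definition nvert t := n_orbits <<[set r1 t; r2 t]>>.
Definition nface t := n_orbits <<[set r0 t; r1 t]>>.
(* the number of edges is m (orbits of <r0,r2> have size 4) *)

(* orientable iff the flag graph is bipartite *)
Definition orientable t : bool :=
  [exists col : {ffun 'I_(4 * m) -> bool},
    [forall x, [&& col (r0 t x) == ~~ col x,
                   col (r1 t x) == ~~ col x &
                   col (r2 t x) == ~~ col x]]].

(* t is a unicellular map with n vertices in N_h (Euler genus h,
   orientable (sphere) iff h = 0, non-orientable iff h > 0).
   Euler's formula: v - e + f = 2 - h. *)
Definition is_umap (n h : nat) t : bool :=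
  [&& is_map t, (nvert t == n)%N, (nface t == 1)%N,
      (nvert t + nface t + h == 2 + m)%N & orientable t == (h == 0%N)].

Definition relabel (p : flags m) t : triple m :=
  (p^-1 * r0 t * p, p^-1 * r1 t * p, p^-1 * r2 t * p).

Definition iso_class t : {set triple m} := [set relabel p t | p : flags m].

Definition umap_count_edges (n h : nat) : nat :=
  #|[set iso_class t | t in [set t | is_umap n h t]]|.
End MapDefs.

(* |UMap(n, N_h)|: the edgeless map (a single vertex on the sphere, one face)
   plus the maps with m >= 1 edges; by Euler's formula a unicellular map
   has m = n + h - 1 edges, so summing over 1 <= m <= n + h is exhaustive. *)
Definition UMap_card (n h : nat) : nat :=
  ((n == 1) && (h == 0))%N + \sum_(1 <= m < (n + h).+1) umap_count_edges m n h.

(* Main.v *)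
Require Import Defs.
From mathcomp Require Import all_boot.
From Stdlib Require Import Reals.
From mathcomp Require Import all_fingroup zify.
From Stdlib Require Import Lra Lia.
From mathcomp Require Import ssrnat.
Set Implicit Arguments. Unset Strict Implicit. Unset Printing Implicit Defensive.

Section GL.
Variables (T : finType) (a b : T -> T).
Hypotheses (ha : involutive a) (hb : involutive b).

Definition rel_ab : rel T := fun x y => (y == a x) || (y == b x).
Let rho := fun x => a (b x).
Let rho_inj : injective rho.
Proof. by move=> x y /(inv_inj ha) /(inv_inj hb). Qed.

Let key j x : iter j rho (a (iter j rho x)) = a x.
Proof.
elim: j x => [|j IH] x //.
rewrite iterSr iterS.
have -> : forall z, rho (a (rho z)) = a z by move=> z; rewrite /rho ha hb.
exact: IH.
Qed.

Let iter_mul q x : iter (q * fingraph.order rho x) rho x = x.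
Proof.
elim: q => [|q IH] //; by rewrite mulSn iterD IH (iter_order rho_inj).
Qed.

Let iter_mod n x : iter n rho x = iter (n %% fingraph.order rho x) rho x.
Proof. by rewrite {1}(divn_eq n (fingraph.order rho x)) addnC iterD iter_mul. Qed.

Let fix_dvd n x : iter n rho x = x -> fingraph.order rho x %| n.
Proof.
move=> H; rewrite /dvdn; apply/eqP.
have lt: n %% fingraph.order rho x < fingraph.order rho x by rewrite ltn_pmod // order_gt0.
have := findex_iter lt; rewrite -iter_mod H findex0 => <-; done.
Qed.

Let dvd_fix n x : fingraph.order rho x %| n -> iter n rho x = x.
Proof. by move=> /dvdnP [q ->]; rewrite iter_mul. Qed.

Lemma GL w0 y y' : a w0 = w0 -> connect rel_ab w0 y -> b y = y ->
  connect rel_ab w0 y' -> b y' = y' -> y = y'.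
Proof.
move=> hw.
have stepa u : fconnect rho w0 u -> fconnect rho w0 (a u).
  move=> /iter_findex Hu.
  have := fconnect_iter rho (findex rho w0 u) (a u).
  rewrite -{3}Hu key hw => H.
  by rewrite fconnect_sym.
have stepb u : fconnect rho w0 u -> fconnect rho w0 (b u).
  move=> Hu; have -> : b u = a (rho u) by rewrite /rho ha.
  apply: stepa; apply: connect_trans Hu (fconnect1 _ _).
have C1 z : connect rel_ab w0 z -> fconnect rho w0 z.
  move=> /connectP [p Hp ->].
  have gen : forall q u, fconnect rho w0 u -> path rel_ab u q -> fconnect rho w0 (last u q).
    elim=> [|v q IH] u Hu //= /andP [Huv Hq].
    apply: IH Hq; case/orP: Huv => /eqP ->; [exact: stepa | exact: stepb].
  by apply: gen Hp; apply: connect0.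
have C2 z : fconnect rho w0 z -> b z = z -> iter (findex rho w0 z).*2.+1 rho w0 = w0.
  move=> Hz Hb; rewrite -addnn -addnS iterD iterS iter_findex //.
  have E := key (findex rho w0 z) w0; rewrite iter_findex // hw in E.
  have -> : rho z = a z by rewrite /rho Hb.
  exact: E.
move=> Hy Hby Hy' Hby'.
have {}Hy := C1 _ Hy; have {}Hy' := C1 _ Hy'.
have D1 := fix_dvd (C2 _ Hy Hby); have D2 := fix_dvd (C2 _ Hy' Hby').
rewrite -(iter_findex Hy) -(iter_findex Hy').
set o := fingraph.order rho w0 in D1 D2 *.
have odd_o : odd o.
  apply: contraLR isT => Ho.
  have : 2 %| (findex rho w0 y).*2.+1 by apply: dvdn_trans D1; rewrite dvdn2.
  by rewrite dvdn2 /= odd_double.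
wlog le: y y' Hy Hy' Hby Hby' D1 D2 / findex rho w0 y' <= findex rho w0 y.
  move=> W; case: (leqP (findex rho w0 y') (findex rho w0 y)) => [h|/ltnW h].
    exact: W.
  by symmetry; apply: W.
set i := findex rho w0 y in D1 le *; set i' := findex rho w0 y' in D2 le *.
have : o %| (i - i') * 2.
  have := dvdn_sub D1 D2; by rewrite subSS -doubleB -muln2.
rewrite Gauss_dvdl ?coprimen2 // => /dvd_fix H.
by rewrite -(subnK le) addnC iterD H.
Qed.
End GL.


Section Std.
Variable m' : nat.
Local Notation m := m'.+1.
Local Notation N := (4 * m).

Lemma N_gt0 : 0 < N. Proof. by []. Qed.
Definition x0 : 'I_N := Ordinal N_gt0.
Definition mkf (i : nat) : 'I_N := insubd x0 i.
Lemma val_mkf i : i < N -> (mkf i : nat) = i.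
Proof. by move=> h; rewrite val_insubd h. Qed.

Definition s0n (x : nat) := if odd x then x.-1 else x.+1.
Definition s1n (x : nat) :=
  if odd x then (if x.+1 == N then 0 else x.+1) else (if x == 0 then N.-1 else x.-1).

Lemma s0n_lt x : x < N -> s0n x < N.
Proof. rewrite /s0n; case: ifPn => h; lia. Qed.
Lemma s1n_lt x : x < N -> s1n x < N.
Proof. rewrite /s1n; case: ifPn => h; case: ifPn => /eqP h2; lia. Qed.

Definition s0f (x : 'I_N) := mkf (s0n x).
Definition s1f (x : 'I_N) := mkf (s1n x).

Lemma s0f_val x : (s0f x : nat) = s0n x.
Proof. by rewrite val_mkf // s0n_lt. Qed.
Lemma s1f_val x : (s1f x : nat) = s1n x.
Proof. by rewrite val_mkf // s1n_lt. Qed.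

Lemma s0f_inv : involutive s0f.
Proof.
move=> x; apply: val_inj => /=; rewrite !s0f_val /s0n.
have := ltn_ord x; case: (boolP (odd x)) => h1 /=;
  case: ifPn => h2; lia.
Qed.
Lemma s1f_inv : involutive s1f.
Proof.
move=> x; apply: val_inj => /=; rewrite !s1f_val /s1n.
have := ltn_ord x.
case: (boolP (odd x)) => h1 /=;
  [case: (x.+1 =P N) => h2 /= | case: (x =P 0 :> nat) => h2 /=]; repeat (case: ifPn => ? /=); lia.
Qed.

Definition S0 : {perm 'I_N} := perm (inv_inj s0f_inv).
Definition S1 : {perm 'I_N} := perm (inv_inj s1f_inv).

Lemma S0_val x : (S0 x : nat) = s0n x. Proof. by rewrite permE s0f_val. Qed.
Lemma S1_val x : (S1 x : nat) = s1n x. Proof. by rewrite permE s1f_val. Qed.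
Lemma S0K x : S0 (S0 x) = x. Proof. by rewrite !permE s0f_inv. Qed.
Lemma S1K x : S1 (S1 x) = x. Proof. by rewrite !permE s1f_inv. Qed.

End Std.


Section PartB.
Variable m' : nat.
Local Notation m := m'.+1.
Local Notation N := (4 * m).
Local Notation mkf := (@mkf m').
Local Notation S0 := (@S0 m').
Local Notation S1 := (@S1 m').
Variable r2 : {perm 'I_N}.

Definition restr (f : 'I_N -> 'I_N) (k : nat) (x : 'I_N) : 'I_N :=
  if (x < k.*2) && (f x < k.*2) then f x else x.
Definition ak k := restr S1 k.
Definition bk k := restr r2 k.
Definition ek k := rel_ab (ak k) (bk k).
Definition pi j := (r2 (mkf j.*2))./2.
Definition opn j := j < pi j.
Definition act j := S1 (mkf j.*2).
Definition eff j := ~~ opn j && ~~ connect (ek j) (act j) (r2 (mkf j.*2)).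
Definition Fp j := [pick y | connect (ek j) (act j) y && (bk j y == y)].
Definition cheap j := ~~ opn j && (Fp j == Some (r2 (mkf j.*2))).
Definition expc j := ~~ opn j && ~~ cheap j.

Hypothesis hinv : forall x, r2 (r2 x) = x.
Hypothesis hfp : forall x, r2 x != x.
Hypothesis hcomm : forall x, r2 (S0 x) = S0 (r2 x).
Hypothesis hfp2 : forall x, r2 (S0 x) != x.

Lemma restr_inv f k : involutive f -> involutive (restr f k).
Proof.
move=> hf x; rewrite {2}/restr.
case: ifPn => [/andP [h1 h2]|h]; first by rewrite /restr hf h1 h2.
by rewrite /restr (negbTE h).
Qed.

Lemma ak_inv k : involutive (ak k). Proof. apply: restr_inv; exact: S1K. Qed.
Lemma bk_inv k : involutive (bk k). Proof. by apply: restr_inv. Qed.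

Lemma rel_ab_sym (T : finType) (a b : T -> T) :
  involutive a -> involutive b -> symmetric (rel_ab a b).
Proof.
move=> ha hb x y; rewrite /rel_ab.
apply/orP/orP => [] [] /eqP ->; by [left; rewrite ha | right; rewrite hb].
Qed.

Lemma ek_sym k : symmetric (ek k).
Proof. apply: rel_ab_sym; [exact: ak_inv | exact: bk_inv]. Qed.

Lemma ek_csym k x y : connect (ek k) x y = connect (ek k) y x.
Proof. by apply: sym_connect_sym; exact: ek_sym. Qed.

Lemma restr_mono f k k' x : k <= k' -> restr f k x != x -> restr f k' x = restr f k x.
Proof.
rewrite /restr => le; case: ifPn => [/andP [h1 h2]|]; last by rewrite eqxx.
have h1' : x < k'.*2 by apply: leq_trans h1 _; rewrite leq_double.
have h2' : f x < k'.*2 by apply: leq_trans h2 _; rewrite leq_double.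
by rewrite h1' h2'.
Qed.

Lemma ek_mono k k' x y : k <= k' -> connect (ek k) x y -> connect (ek k') x y.
Proof.
move=> le; apply: connect_sub => u v; rewrite /ek /rel_ab.
case/orP => /eqP ->.
  case: (eqVneq (ak k u) u) => [->|h]; first exact: connect0.
  by apply: connect1; rewrite /rel_ab /ak (restr_mono le h) eqxx.
case: (eqVneq (bk k u) u) => [->|h]; first exact: connect0.
by apply: connect1; rewrite /rel_ab /bk (restr_mono le h) eqxx orbT.
Qed.

Lemma mkfE i : i < N -> (mkf i : nat) = i. Proof. exact: val_mkf. Qed.

Lemma S0_mkf2 j : j < m.*2 -> S0 (mkf j.*2) = mkf j.*2.+1.
Proof.
move=> h; apply: val_inj => /=; rewrite S0_val !mkfE /s0n ?odd_double //; lia.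
Qed.

Lemma S1_mkf2 j : 0 < j -> j < m.*2 -> S1 (mkf j.*2) = mkf j.*2.-1.
Proof.
move=> h0 h; apply: val_inj => /=; rewrite S1_val !mkfE /s1n ?odd_double //; try lia.
case: ifPn => ?; lia.
Qed.

Lemma flag_dec (x : 'I_N) : x = mkf (x./2).*2 \/ x = S0 (mkf (x./2).*2).
Proof.
have hx := ltn_ord x.
case: (boolP (odd x)) => ho; [right|left]; apply: val_inj => /=;
  rewrite ?S0_val !mkfE /s0n ?odd_double //; lia.
Qed.

Lemma S0_side (y : 'I_N) : (S0 y)./2 = y./2.
Proof. rewrite S0_val /s0n; case: ifPn => ?; lia. Qed.

Lemma S0_neq (y : 'I_N) : S0 y != y.
Proof.
apply/eqP => /(congr1 val); rewrite /= S0_val /s0n; case: ifPn => ?; lia.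
Qed.

Lemma r2S0 x : r2 (S0 x) = S0 (r2 x). Proof. exact: hcomm. Qed.

Lemma pi_lt j : pi j < m.*2.
Proof. rewrite /pi; have := ltn_ord (r2 (mkf j.*2)); lia. Qed.

Lemma pi_neq j : j < m.*2 -> pi j != j.
Proof.
move=> hj; apply/eqP => E.
have [H|H] := flag_dec (r2 (mkf j.*2)); move: H; rewrite -/(pi j) E => H.
  by move: (hfp (mkf j.*2)); rewrite H eqxx.
by move: (hfp2 (mkf j.*2)); rewrite r2S0 H S0K eqxx.
Qed.


Lemma mkf2_lt j : j < m.*2 -> (mkf j.*2 : nat) = j.*2.
Proof. move=> h; rewrite mkfE //; lia. Qed.

Lemma pi_inv j : j < m.*2 -> pi (pi j) = j.
Proof.
move=> hj; have [H|H] := flag_dec (r2 (mkf j.*2)); rewrite -/(pi j) in H.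
  by rewrite /pi -H hinv mkf2_lt //; lia.
have E : r2 (mkf (pi j).*2) = S0 (mkf j.*2).
  by rewrite -[LHS]S0K -r2S0 -H hinv.
by rewrite /pi E S0_side mkf2_lt //; lia.
Qed.

Lemma r2_det i : i < m.*2 -> r2 (mkf i.*2) =
  if r2 (mkf (pi i).*2) == mkf i.*2 then mkf (pi i).*2 else S0 (mkf (pi i).*2).
Proof.
move=> hi; have hp := pi_inv hi.
have [H|H] := flag_dec (r2 (mkf (pi i).*2)); rewrite -/(pi (pi i)) hp in H.
  by rewrite H eqxx -H hinv.
have -> : (r2 (mkf (pi i).*2) == mkf i.*2) = false.
  by rewrite H; apply/negbTE; apply: S0_neq.
by rewrite -[LHS]S0K -r2S0 -H hinv.
Qed.

Lemma opn_count : \sum_(0 <= j < m.*2) (opn j : nat) <= m.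
Proof.
rewrite big_mkord.
have -> : \sum_(j < m.*2) (opn j : nat) = #|[set j : 'I_(m.*2) | opn j]|.
  rewrite -sum1_card [RHS]big_mkcond /=; apply: eq_bigr => j _; rewrite inE; by case: (opn j).
set O := [set j : 'I_(m.*2) | opn j].
set Cl := [set j : 'I_(m.*2) | pi j < j].
pose pf (j : 'I_(m.*2)) : 'I_(m.*2) := Ordinal (pi_lt j).
have pf_inj : injective pf.
  move=> j1 j2 /(congr1 val) /= E; apply: val_inj => /=.
  by rewrite -(pi_inv (ltn_ord j1)) E pi_inv.
have h1 : #|O| <= #|Cl|.
  rewrite -(card_imset O pf_inj); apply: subset_leq_card; apply/subsetP => y.
  case/imsetP => j; rewrite inE => hj ->; rewrite inE /= pi_inv //.
have h2 : #|O| + #|Cl| <= m.*2.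
  rewrite -cardsUI.
  have -> : O :&: Cl = set0.
    apply/setP => j; rewrite !inE /opn; apply/negbTE/negP => /andP [g1 g2]; lia.
  by rewrite cards0 addn0; apply: leq_trans (max_card _) _; rewrite card_ord.
lia.
Qed.


Lemma edge_a k (x : 'I_N) : x < k.*2 -> S1 x < k.*2 -> ek k x (S1 x).
Proof. by move=> h1 h2; rewrite /ek /rel_ab /ak /restr h1 h2 eqxx. Qed.
Lemma edge_b k (x : 'I_N) : x < k.*2 -> r2 x < k.*2 -> ek k x (r2 x).
Proof. by move=> h1 h2; rewrite /ek /rel_ab /bk /restr h1 h2 eqxx orbT. Qed.

Lemma val_S1_2 k : 0 < k -> k < m.*2 -> (S1 (mkf k.*2) : nat) = k.*2.-1.
Proof. by move=> h1 h2; rewrite S1_mkf2 // mkfE //; lia. Qed.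

Lemma lt_split k (x : 'I_N) : k < m.*2 -> x < k.+1.*2 ->
  x < k.*2 \/ x = mkf k.*2 \/ x = S0 (mkf k.*2).
Proof.
move=> hk hx; case: (ltnP x k.*2) => h; [by left | right].
rewrite S0_mkf2 //.
case: (boolP (odd x)) => ho; [right|left]; apply: val_inj; rewrite /= mkfE; lia.
Qed.

Lemma close_y k : k < m.*2 -> ~~ opn k -> r2 (mkf k.*2) < k.*2.
Proof.
move=> hk ho; have hn := pi_neq hk; move: ho hn; rewrite /opn /pi => ho hn.
have : (r2 (mkf k.*2))./2 < k by rewrite ltn_neqAle hn leqNgt.
lia.
Qed.

Lemma close_pos k : k < m.*2 -> ~~ opn k -> 0 < k.
Proof. move=> hk ho; have := close_y hk ho; lia. Qed.

Lemma cover k : k <= m.*2 -> exists R : {set 'I_N},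
  (forall x : 'I_N, x < k.*2 -> exists2 r, r \in R & connect (ek k) x r) /\
  #|R| + \sum_(0 <= j < k) eff j <= \sum_(0 <= j < k) opn j + 1.
Proof.
elim: k => [_|k IH hk].
  by exists set0; split; [move=> x; rewrite ltn0 | rewrite cards0 !big_geq].

have hk' : k < m.*2 by [].
have [R [Rcov Rcard]] := IH (ltnW hk).
rewrite !big_nat_recr //=.
have mono x r : connect (ek k) x r -> connect (ek k.+1) x r.
  by apply: ek_mono.
case: (boolP (opn k)) => ho.
- have -> : eff k = false by rewrite /eff ho.
  case: (posnP k) => [k0|kpos].
    subst k; exists [set mkf 0; mkf 1]; split.
      move=> x hx; have [->|->] : x = mkf 0 \/ x = mkf 1.
          by case: (ltnP x 1) => h; [left|right]; apply: val_inj; rewrite /= mkfE //; lia.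
        by exists (mkf 0); [rewrite !inE eqxx | apply: connect0].
      by exists (mkf 1); [rewrite !inE eqxx orbT | apply: connect0].
    rewrite big_geq //= cards2 big_geq //; by case: (_ != _).
  exists (S0 (mkf k.*2) |: R); split.
    move=> x hx; have [h|[->|->]] := lt_split hk' hx.
    + have [r hr hc] := Rcov x h; exists r; [by rewrite inE hr orbT | exact: mono].
    + have hS : S1 (mkf k.*2) < k.*2 by rewrite val_S1_2 //; lia.
      have [r hr hc] := Rcov _ hS; exists r; first by rewrite inE hr orbT.
      apply: connect_trans (mono _ _ hc); apply: connect1; apply: edge_a.
        by rewrite mkfE //; lia.
      by rewrite val_S1_2 //; lia.
    + by exists (S0 (mkf k.*2)); [rewrite setU11 | apply: connect0].
  rewrite cardsU1; move: Rcard; case: (_ \notin _) => /=; lia.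
- have kpos := close_pos hk' ho.
  set y := r2 (mkf k.*2).
  have hy : y < k.*2 by apply: close_y.
  have hz : r2 (S0 (mkf k.*2)) < k.*2 by rewrite r2S0 -/y S0_val /s0n; case: ifPn => ?; lia.
  have h2k : (mkf k.*2 : nat) = k.*2 by rewrite mkfE //; lia.
  have hS : S1 (mkf k.*2) < k.*2 by rewrite val_S1_2 //; lia.
  have cov : forall x : 'I_N, x < k.+1.*2 -> exists2 r, r \in R & connect (ek k.+1) x r.
    move=> x hx; have [h|[->|->]] := lt_split hk' hx.
    + have [r hr hc] := Rcov x h; exists r => //; exact: mono.
    + have [r hr hc] := Rcov _ hS; exists r => //.
      apply: connect_trans (mono _ _ hc); apply: connect1; apply: edge_a.
        by rewrite h2k; lia.
      by rewrite val_S1_2 //; lia.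
    + have [r hr hc] := Rcov _ hz; exists r => //.
      apply: connect_trans (mono _ _ hc); apply: connect1; apply: edge_b.
        by rewrite S0_val /s0n h2k odd_double; lia.
      by lia.
  case: (boolP (eff k)) => he; last first.
    exists R; split => //; move: Rcard => /=; lia.
  have nc : ~~ connect (ek k) (act k) y by move: he; rewrite /eff ho.
  have [ry hry cy] := Rcov _ hy.
  have [ra hra ca] := Rcov _ hS.
  have ne : ry != ra.
    apply/eqP => E; apply: (negP nc); rewrite /act; apply: connect_trans ca _.
    by rewrite -E ek_csym.
  have cya : connect (ek k.+1) ry ra.
    rewrite ek_csym in cy.
    apply: connect_trans (mono _ _ cy) _.
    apply: connect_trans (connect1 (_ : ek k.+1 y (mkf k.*2))) _.
      rewrite -[X in ek _ _ X]hinv; apply: edge_b; [lia | rewrite hinv h2k; lia].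
    apply: connect_trans (connect1 (_ : ek k.+1 (mkf k.*2) (S1 (mkf k.*2)))) (mono _ _ ca).
    apply: edge_a; [rewrite h2k; lia | lia].
  exists (R :\ ry); split.
    move=> x hx; have [r hr hc] := cov x hx.
    case: (eqVneq r ry) => [E|E].
      exists ra; first by rewrite !inE eq_sym ne.
      by apply: connect_trans hc _; rewrite E.
    by exists r => //; rewrite !inE E.
  move: Rcard; rewrite (cardsD1 ry R) hry /=; lia.
Qed.


Lemma act_fix j : j < m.*2 -> ak j (act j) = act j.
Proof.
move=> hj; rewrite /ak /restr /act S1K mkfE; last by lia.
by rewrite ltnn andbF.
Qed.

Lemma exp_eff j : j < m.*2 -> expc j -> eff j.
Proof.
move=> hj /andP [ho hc]; rewrite /eff ho /=; apply: contra hc => hcon.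
rewrite /cheap ho /= /Fp.
set y := r2 (mkf j.*2).
have hy : y < j.*2 by apply: close_y.
have hby : bk j y = y.
  rewrite /bk /restr /y hinv mkfE; last by lia.
  by rewrite ltnn andbF.
case: pickP => [z /andP [cz /eqP bz]|none].
  have := GL (ak_inv j) (bk_inv j) (act_fix hj) cz bz hcon hby.
  by move=> ->.
by move: (none y); rewrite hcon hby eqxx.
Qed.

Lemma exp_count : \sum_(0 <= j < m.*2) (expc j : nat) <= \sum_(0 <= j < m.*2) (eff j : nat).
Proof.
rewrite !big_nat; apply: leq_sum => j /andP [_ hj].
by case: (boolP (expc j)) => // /(exp_eff hj) ->.
Qed.

Definition G12 : {set {perm 'I_N}} := <<[set S1; r2]>>%g.

Lemma ek_full_orbit x y : connect (ek m.*2) x y -> y \in orbit 'P G12 x.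
Proof.
move=> /connectP [p Hp ->] {y}.
elim: p x Hp => [|v p IH] x /=; first by move=> _; apply: orbit_refl.
move=> /andP [hxv hp]; apply: orbit_trans (IH _ hp) _.
have hx : x < (m.*2).*2 by have := ltn_ord x; lia.
have hS : forall z : 'I_N, z < (m.*2).*2 by move=> z; have := ltn_ord z; lia.
move: hxv; rewrite /ek /rel_ab /ak /bk /restr !hS /= => /orP [] /eqP ->.
  have h1 : S1 \in G12 by apply: mem_gen; rewrite !inE eqxx.
  exact: (mem_orbit 'P x h1).
have h1 : r2 \in G12 by apply: mem_gen; rewrite !inE eqxx orbT.
exact: (mem_orbit 'P x h1).
Qed.

Lemma norbits_le : n_orbits G12 + \sum_(0 <= j < m.*2) (eff j : nat) <= m.+1.
Proof.
have [R [Rcov Rcard]] := cover (leqnn m.*2).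
have hle : n_orbits G12 <= #|R|.
  rewrite /n_orbits; apply: leq_trans (leq_imset_card (fun r => orbit 'P G12 r) R).
  apply: subset_leq_card; apply/subsetP => o /imsetP [x _ ->].
  have hx : x < (m.*2).*2 by have := ltn_ord x; lia.
  have [r hr hc] := Rcov x hx.
  apply/imsetP; exists r => //; apply/orbit_eqP.
  rewrite orbit_sym; exact: ek_full_orbit.
have := opn_count; lia.
Qed.

End PartB.


Section Inj.
Variable m' : nat.
Local Notation m := m'.+1.
Local Notation N := (4 * m).
Local Notation mkf := (@mkf m').
Local Notation S0 := (@S0 m').
Local Notation S1 := (@S1 m').

Definition HB (r : {perm 'I_N}) := [/\ forall x, r (r x) = x, forall x, r x != x,
   forall x, r (S0 x) = S0 (r x) & forall x, r (S0 x) != x].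

Definition shape (r : {perm 'I_N}) : {ffun 'I_(m.*2) -> 'I_3} :=
  [ffun j : 'I_(m.*2) => if opn r j then ord0 else if cheap r j then inord 1 else inord 2].
Definition vals (r : {perm 'I_N}) : {ffun 'I_(m.*2) -> option 'I_N} :=
  [ffun j : 'I_(m.*2) => if expc r j then Some (r (mkf (val j).*2)) else None].

Definition Agree (rA rB : {perm 'I_N}) k :=
  forall j, j < k -> ~~ opn rA j -> rA (mkf j.*2) = rB (mkf j.*2).

Lemma open_det rA rB k i : HB rA -> HB rB -> Agree rA rB k -> i < m.*2 ->
  opn rA i -> pi rA i < k -> pi rB i = pi rA i /\ rA (mkf i.*2) = rB (mkf i.*2).
Proof.
case=> a1 a2 a3 a4; case=> b1 b2 b3 b4 Ag hi ho hk.
set j := pi rA i.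
have hj : j < m.*2 by apply: pi_lt.
have pj : pi rA j = i by apply: pi_inv.
have cj : ~~ opn rA j by rewrite /opn pj -leqNgt ltnW.
have E := Ag j hk cj.
have pj' : pi rB j = i by rewrite /pi -E.
have pi' : pi rB i = j by rewrite -pj' pi_inv.
split => //.
by rewrite (r2_det a1 a3 hi) (r2_det b1 b3 hi) pi' -/j E.
Qed.

Lemma bk_agree rA rB k : HB rA -> HB rB -> k <= m.*2 -> Agree rA rB k ->
  (forall j, j < m.*2 -> opn rA j = opn rB j) -> bk rA k =1 bk rB k.
Proof.
move=> hA hB hk Ag Eo.
have AgB : Agree rB rA k.
  move=> j hj; rewrite -Eo; last by lia.
  by move=> ho; rewrite (Ag j hj ho).
have key : forall i, i < k ->
  rA (mkf i.*2) = rB (mkf i.*2) \/ (k.*2 <= rA (mkf i.*2) /\ k.*2 <= rB (mkf i.*2)).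
  move=> i hi; have hi2 : i < m.*2 by lia.
  case: (boolP (opn rA i)) => ho; last by left; apply: Ag.
  case: (ltnP (pi rA i) k) => hp.
    by left; case: (open_det hA hB Ag hi2 ho hp).
  have ho' : opn rB i by rewrite -Eo.
  case: (ltnP (pi rB i) k) => hp'.
    have [E _] := open_det hB hA AgB hi2 ho' hp'; lia.
  by right; move: hp hp'; rewrite /pi; lia.
case: hA => a1 a2 a3 a4; case: hB => b1 b2 b3 b4.
move=> x; rewrite /bk /restr.
case: (ltnP x k.*2) => hx /=; last by [].
have hi : x./2 < k by lia.
have [Hx|Hx] := flag_dec x.
  rewrite Hx; case: (key _ hi) => [->|[h1 h2]] //.
  by rewrite (leqNgt _ (rA _)) in h1; rewrite (leqNgt _ (rB _)) in h2; rewrite (negbTE h1) (negbTE h2).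
rewrite Hx a3 b3; case: (key _ hi) => [->|[h1 h2]] //.
have g1 : ~~ (S0 (rA (mkf x./2.*2)) < k.*2) by rewrite -leqNgt; move: h1; rewrite S0_val /s0n; case: ifPn => ?; lia.
have g2 : ~~ (S0 (rB (mkf x./2.*2)) < k.*2) by rewrite -leqNgt; move: h2; rewrite S0_val /s0n; case: ifPn => ?; lia.
by rewrite (negbTE g1) (negbTE g2).
Qed.


Lemma bk_full r (x : 'I_N) : bk r m.*2 x = r x.
Proof.
have h : forall z : 'I_N, z < (m.*2).*2 by move=> z; have := ltn_ord z; lia.
by rewrite /bk /restr !h.
Qed.

Lemma code_inj rA rB : HB rA -> HB rB -> shape rA = shape rB -> vals rA = vals rB -> rA = rB.
Proof.
move=> hA hB Hs Hv.
have Eo : forall j, j < m.*2 -> opn rA j = opn rB j.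
  move=> j hj; have := congr1 (fun f : {ffun 'I_(m.*2) -> 'I_3} => val (f (Ordinal hj))) Hs; rewrite /= !ffunE.
  by case: (opn rA j); case: (opn rB j); case: (cheap rA j); case: (cheap rB j);
    rewrite /= ?inordK.
have Ec : forall j, j < m.*2 -> cheap rA j = cheap rB j.
  move=> j hj; have := congr1 (fun f : {ffun 'I_(m.*2) -> 'I_3} => val (f (Ordinal hj))) Hs; rewrite /= !ffunE.
  rewrite /cheap -(Eo j hj).
  by case: (opn rA j); case: (Fp rA j == _); case: (Fp rB j == _); rewrite /= ?inordK.
have Ag : forall k, k <= m.*2 -> Agree rA rB k.
  elim=> [_ j //|k IH hk j hj hoj].
  have hk' : k < m.*2 by [].
  case: (ltnP j k) => hjk; first by apply: (IH (ltnW hk)).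
  have ejk : j = k by lia.
  subst j.
  have bE := bk_agree hA hB (ltnW hk) (IH (ltnW hk)) Eo.
  have cE : connect (ek rA k) =2 connect (ek rB k).
    by apply: eq_connect => x y; rewrite /ek /rel_ab bE.
  have FE : Fp rA k = Fp rB k.
    by apply: eq_pick => y /=; rewrite cE bE.
  case: (boolP (cheap rA k)) => hc.
    have hc' : cheap rB k by rewrite -Ec.
    move: hc hc'; rewrite /cheap FE => /andP [_ /eqP ->] /andP [_ /eqP []] //.
  have := congr1 (fun f : {ffun 'I_(m.*2) -> option 'I_N} => f (Ordinal hk')) Hv; rewrite !ffunE /expc -(Eo k hk') -(Ec k hk') hoj hc /=.
  by case.
apply/permP => x.
by rewrite -bk_full -(bk_full rB) (bk_agree hA hB (leqnn _) (Ag _ (leqnn _)) Eo).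
Qed.


Definition HBb (r : {perm 'I_N}) := [&& [forall x, r (r x) == x], [forall x, r x != x],
   [forall x, r (S0 x) == S0 (r x)] & [forall x, r (S0 x) != x]].

Lemma HBP r : HBb r -> HB r.
Proof.
case/and4P => /forallP h1 /forallP h2 /forallP h3 /forallP h4.
by split => x; [apply/eqP | | apply/eqP | ].
Qed.

Definition Eset (s : {ffun 'I_(m.*2) -> 'I_3}) := [set j | s j == inord 2].

Definition Codes (h : nat) :=
  [set c : {ffun 'I_(m.*2) -> 'I_3} * {ffun 'I_(m.*2) -> option 'I_N} |
     (#|Eset c.1| <= h) && (c.2 \in pffun_on None (Eset c.1) predT)].

Lemma card_Codes h : #|Codes h| <= 3 ^ (m.*2) * (N.+1) ^ h.
Proof.
rewrite -sum1_card big_mkcond /=.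
rewrite (eq_bigr (fun p => (fun s v => if (s, v) \in Codes h then 1 else 0) p.1 p.2));
  last by case.
rewrite -(pair_bigA _ (fun s v => if (s, v) \in Codes h then 1 else 0)) /=.
have -> : 3 ^ (m.*2) = #|{ffun 'I_(m.*2) -> 'I_3}| by rewrite card_ffun !card_ord.
rewrite -sum_nat_const; apply: leq_sum => s _.
case: (leqP #|Eset s| h) => hE; last first.
  by rewrite big1 // => v _; rewrite inE /= leqNgt hE.
apply: leq_trans (_ : \sum_v (if v \in pffun_on None (Eset s) predT then 1 else 0) <= _).
  by apply: leq_sum => v _; rewrite inE /= hE /=; case: (_ \in _).
rewrite -big_mkcond sum1_card card_pffun_on card_option card_ord.
by apply: leq_pexp2l.
Qed.


Lemma sum_card_ord (P : nat -> bool) k :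
  \sum_(0 <= j < k) (P j : nat) = #|[set j : 'I_k | P j]|.
Proof.
rewrite big_mkord -sum1_card [RHS]big_mkcond /=; apply: eq_bigr => j _.
by rewrite inE; case: (P j).
Qed.

Lemma partB_bound n h : n + h = m.+1 ->
  #|[set r : {perm 'I_N} | HBb r && (n_orbits (G12 r) == n)]| <= 3 ^ (m.*2) * (N.+1) ^ h.
Proof.
move=> hnh; set C := [set r | _].
have inj : {in C &, injective (fun r => (shape r, vals r))}.
  move=> r1 r2; rewrite !inE => /andP [/HBP h1 _] /andP [/HBP h2 _] [e1 e2].
  exact: code_inj.
rewrite -(card_in_imset inj); apply: leq_trans (card_Codes h).
apply: subset_leq_card; apply/subsetP => c /imsetP [r]; rewrite inE => /andP [/HBP hr /eqP hn] ->.
have ES : Eset (shape r) = [set j : 'I_(m.*2) | expc r j].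
  apply/setP => j; rewrite !inE ffunE /expc.
  by case: (opn r j); case: (cheap r j); rewrite //= -(inj_eq val_inj) /= ?inordK.
rewrite inE /= ES; apply/andP; split.
  case: hr => a1 a2 a3 a4.
  have := exp_count a1 a2 a3 a4; have := norbits_le a1 a2 a3 a4.
  rewrite hn -!sum_card_ord; lia.
apply/pffun_onP; split; last by move=> ? _.
apply/subsetP => j; rewrite !inE ffunE; by case: (expc r j).
Qed.

End Inj.


Lemma fpf_inv (T : finType) (r : {perm T}) : (r * r == 1)%g -> forall x, r (r x) = x.
Proof. by move=> /eqP h x; rewrite -permM h perm1. Qed.

Section PartA.
Variable m' : nat.
Local Notation m := m'.+1.
Local Notation N := (4 * m).
Local Notation mkf := (@mkf m').
Local Notation S0 := (@S0 m').
Local Notation S1 := (@S1 m').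
Variable t : triple m.
Hypothesis Hmap : is_map t.
Hypothesis Hface : nface t = 1.

Local Notation q0 := (r0 t).
Local Notation q1 := (r1 t).

Let q0K : forall x, q0 (q0 x) = x.
Proof. by case/and5P: Hmap => /andP [h _] *; apply: fpf_inv. Qed.
Let q1K : forall x, q1 (q1 x) = x.
Proof. by case/and5P: Hmap => _ /andP [h _] *; apply: fpf_inv. Qed.
Let q0fp : forall x, q0 x != x.
Proof. by case/and5P: Hmap => /andP [_ /forallP h] *. Qed.
Let q1fp : forall x, q1 x != x.
Proof. by case/and5P: Hmap => _ /andP [_ /forallP h] *. Qed.

Let psi := fun x => q1 (q0 x).
Let psi_inj : injective psi.
Proof. by move=> x y /(inv_inj q1K) /(inv_inj q0K). Qed.
Let x0 := mkf 0.

Definition walk k := if odd k then q0 (iter k./2 psi x0) else iter k./2 psi x0.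

Lemma walk_r0 k : q0 (walk k) = walk (s0n k).
Proof.
rewrite /walk /s0n; case: (boolP (odd k)) => ho.
  have -> : odd k.-1 = false by apply/negbTE; lia.
  by rewrite q0K; congr (iter _ _ _); lia.
have -> : odd k.+1 by lia.
by congr (q0 (iter _ _ _)); lia.
Qed.

Lemma walk_r1_odd k : odd k -> q1 (walk k) = walk k.+1.
Proof.
move=> ho; rewrite /walk ho.
have -> : odd k.+1 = false by apply/negbTE; lia.
have -> : k.+1./2 = (k./2).+1 by lia.
by [].
Qed.

Lemma walk_r1_even k : ~~ odd k -> 0 < k -> q1 (walk k) = walk k.-1.
Proof.
move=> ho hk; have hp : odd k.-1 by lia.
by rewrite -{1}(prednK hk) -(walk_r1_odd hp) q1K.
Qed.

Lemma key0 j x : iter j psi (q0 (iter j psi x)) = q0 x.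
Proof.
elim: j x => [|j IH] x //.
rewrite iterSr iterS.
have -> : forall z, psi (q0 (psi z)) = q0 z by move=> z; rewrite /psi q0K q1K.
exact: IH.
Qed.

Lemma iter_inj n : injective (iter n psi).
Proof. elim: n => [|n IH] x y //= /psi_inj; exact: IH. Qed.

Lemma noncross i j : iter i psi x0 != q0 (iter j psi x0).
Proof.
apply/eqP => E.
have E2 : iter (j + i) psi x0 = q0 x0 by rewrite iterD E key0.
case: (boolP (odd (i + j))) => hp.
  have hs : j + i = (i + j)./2 + ((i + j)./2).+1 by lia.
  rewrite hs iterD iterS in E2.
  rewrite -(key0 (i + j)./2 x0) in E2.
  move/iter_inj: E2 => /eqP; rewrite /psi; set z := q0 _.
  by rewrite (negbTE (q1fp z)).
have hs : j + i = (i + j)./2 + (i + j)./2 by lia.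
rewrite hs iterD -(key0 (i + j)./2 x0) in E2.
move/iter_inj: E2 => /eqP.
by rewrite eq_sym (negbTE (q0fp _)).
Qed.

Local Notation o := (fingraph.order psi x0).

Lemma walk_period k : walk (k + o.*2) = walk k.
Proof.
rewrite /walk; have -> : odd (k + o.*2) = odd k by lia.
have -> : (k + o.*2)./2 = k./2 + o by lia.
by rewrite iterD (iter_order psi_inj).
Qed.

Lemma walk_inj a b : a < o.*2 -> b < o.*2 -> walk a = walk b -> a = b.
Proof.
move=> ha hb; rewrite /walk.
have io i j : i < o -> j < o -> iter i psi x0 = iter j psi x0 -> i = j.
  by move=> hi hj E; rewrite -(findex_iter hi) E findex_iter.
case: (boolP (odd a)) => hoa; case: (boolP (odd b)) => hob.
- move/(inv_inj q0K)/io => h; have : a./2 = b./2 by apply: h; lia.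
  lia.
- by move=> E; move: (noncross b./2 a./2); rewrite E eqxx.
- by move=> E; move: (noncross a./2 b./2); rewrite E eqxx.
- move/io => h; have : a./2 = b./2 by apply: h; lia.
  lia.
Qed.


Let G01 := <<[set q0; q1]>>%g.

Lemma all_orbit y : y \in orbit 'P G01 x0.
Proof.
have H1 : n_orbits G01 = 1 by exact: Hface.
move: H1; rewrite /n_orbits => H1.
have Ho : orbit 'P G01 y = orbit 'P G01 x0.
  apply/eqP; apply: contraT => hne.
  have : #|[set orbit 'P G01 y; orbit 'P G01 x0]| <= #|[set orbit 'P G01 x | x : 'I_N]|.
    apply: subset_leq_card; apply/subsetP => o.
    by rewrite !inE => /orP [] /eqP ->; apply/imsetP; eexists.
  by rewrite H1 cards2 hne.
by rewrite -Ho orbit_refl.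
Qed.

Let J := [set walk k | k : 'I_(o.*2)].
Let o_pos : 0 < o. Proof. exact: fingraph.order_gt0. Qed.

Let walkJ k : k < o.*2 -> walk k \in J.
Proof. by move=> hk; apply/imsetP; exists (Ordinal hk). Qed.

Let closedJ0 x : x \in J -> q0 x \in J.
Proof.
case/imsetP => k _ ->; rewrite walk_r0; apply: walkJ.
have := ltn_ord k; rewrite /s0n; case: ifPn => ?; lia.
Qed.

Lemma walk_last : q1 (walk 0) = walk (o.*2.-1).
Proof.
have hp : odd (o.*2.-1) by lia.
have := walk_r1_odd hp; rewrite prednK ?double_gt0 //.
by rewrite -(walk_period 0) add0n => <-; rewrite q1K.
Qed.

Let closedJ1 x : x \in J -> q1 x \in J.
Proof.
case/imsetP => k _ ->; have hk := ltn_ord k.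
case: (boolP (odd k)) => ho.
  rewrite walk_r1_odd //; case: (ltnP k.+1 o.*2) => h; first exact: walkJ.
  have -> : k.+1 = 0 + o.*2 by lia.
  by rewrite walk_period; apply: walkJ; lia.
case: (posnP k) => hk0.
  by rewrite hk0 walk_last; apply: walkJ; lia.
by rewrite walk_r1_even //; apply: walkJ; lia.
Qed.

Lemma J_all y : y \in J.
Proof.
have hx0 : x0 \in J.
  have h : 0 < o.*2 by rewrite double_gt0.
  exact: (walkJ h).
have acts : [acts G01, on J | 'P].
  rewrite /G01 gen_subG; apply/subsetP => g /set2P [] ->;
    apply/astabsP => x /=; apply/idP/idP.
  - by move/closedJ0; rewrite q0K.
  - exact: closedJ0.
  - by move/closedJ1; rewrite q1K.
  - exact: closedJ1.
have := acts_sub_orbit x0 acts; rewrite hx0 => /subsetP; apply; exact: all_orbit.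
Qed.

Lemma o2N : o.*2 = N.
Proof.
have winj : injective (fun k : 'I_(o.*2) => walk k).
  by move=> a b /walk_inj E; apply: val_inj; apply: E.
have h1 : #|J| = o.*2 by rewrite card_imset // card_ord.
have h2 : #|J| = N.
  rewrite -[RHS](card_ord N); apply/eqP; rewrite eqn_leq max_card /=.
  by apply: subset_leq_card; apply/subsetP => y _; apply: J_all.
by rewrite -h1 h2.
Qed.

Definition wf (k : 'I_N) : 'I_N := walk k.
Lemma wf_inj : injective wf.
Proof.
move=> a b /walk_inj E; apply: val_inj; apply: E; rewrite o2N; exact: ltn_ord.
Qed.

Lemma walk_q1 k : k < N -> q1 (walk k) = walk (s1n m' k).
Proof.
move=> hk; rewrite /s1n; case: (boolP (odd k)) => ho.
  rewrite walk_r1_odd //; case: eqP => // E.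
  have -> : k.+1 = 0 + o.*2 by rewrite o2N add0n.
  by rewrite walk_period.
case: eqP => [->|h0].
  by rewrite walk_last o2N.
by rewrite walk_r1_even //; lia.
Qed.

Lemma canon : exists p : {perm 'I_N}, ((p^-1 * q0 * p)%g = S0) /\ ((p^-1 * q1 * p)%g = S1).
Proof.
set p0 := perm wf_inj; exists p0^-1%g; rewrite invgK; split; apply/permP => x;
  rewrite !permM; apply: (canLR (permK p0)); rewrite !permE /wf.
  by rewrite walk_r0 s0f_val.
by rewrite walk_q1 ?s1f_val.
Qed.

End PartA.


Section Conj.
Variable m : nat.

Lemma relabelM (p q : flags m) (t : triple m) :
  relabel q (relabel p t) = relabel (p * q)%g t.
Proof. by rewrite /relabel /r0 /r1 /r2 /= !invMg !mulgA. Qed.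

Lemma iso_relabel (p : flags m) (t : triple m) : iso_class (relabel p t) = iso_class t.
Proof.
apply/setP => u; apply/imsetP/imsetP => [[q _ ->]|[q _ ->]].
  by exists (p * q)%g => //; rewrite relabelM.
exists (p^-1 * q)%g => //; by rewrite relabelM mulgA mulgV mul1g.
Qed.

Lemma conj_app (a p : flags m) x : (a ^ p)%g x = p (a (p^-1 x)%g).
Proof. by rewrite conjgE !permM. Qed.

Lemma orbit_conj (A : {set flags m}) (p : flags m) x :
  orbit 'P (A :^ p)%g x = [set p z | z in orbit 'P A (p^-1 x)%g].
Proof.
apply/setP => y; apply/orbitP/imsetP.
- case=> g hg <-; rewrite mem_conjg in hg.
  exists ((g ^ p^-1)%g (p^-1 x)%g); first by apply/orbitP; exists (g ^ p^-1)%g.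
  by rewrite conj_app invgK permKV /= apermE permKV.
- case=> z /orbitP [a ha <-] ->; exists (a ^ p)%g; first by rewrite memJ_conjg.
  by rewrite /= !apermE conj_app.
Qed.

Lemma n_orbits_conj (A : {set flags m}) (p : flags m) : n_orbits (A :^ p)%g = n_orbits A.
Proof.
rewrite /n_orbits.
have -> : [set orbit 'P (A :^ p)%g x | x : 'I_(4 * m)] =
          [set [set p z | z in O] | O : {set 'I_(4 * m)} in [set orbit 'P A x | x : 'I_(4 * m)]].
  apply/setP => O; apply/imsetP/imsetP.
  - case=> x _ ->; exists (orbit 'P A (p^-1 x)%g); first by apply/imsetP; exists (p^-1 x)%g.
    by rewrite orbit_conj.
  - case=> O' /imsetP [x _ ->] ->; exists (p x) => //; by rewrite orbit_conj permK.
rewrite card_imset //; apply: imset_inj; exact: perm_inj.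
Qed.

Lemma nvert_relabel (p : flags m) (t : triple m) : nvert (relabel p t) = nvert t.
Proof.
rewrite /nvert /relabel /r1 /r2 /=.
have E : forall r : flags m, (p^-1 * r * p)%g = (r ^ p)%g by move=> r; rewrite conjgE mulgA.
rewrite !E.
have -> : [set (t.1.2 ^ p)%g; (t.2 ^ p)%g] = ([set t.1.2; t.2] :^ p)%g.
  by rewrite /conjugate imsetU1 imset_set1.
by rewrite genJ n_orbits_conj.
Qed.

End Conj.

Section Count.
Variables (m' n h : nat).
Local Notation m := m'.+1.
Local Notation N := (4 * m).
Local Notation S0 := (@S0 m').
Local Notation S1 := (@S1 m').

Definition Cset := [set r : {perm 'I_N} | HBb r && (n_orbits (G12 r) == n)].

Lemma umap_m (t : triple m) : is_umap n h t -> n + h = m.+1.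
Proof. case/and5P => _ /eqP hn /eqP hf /eqP he _; lia. Qed.

Lemma cj (p a : flags m) x : (p^-1 * a * p)%g x = p (a (p^-1 x)%g).
Proof. by rewrite !permM. Qed.

Lemma canon_triple (t : triple m) : is_umap n h t ->
  exists r, (r \in Cset) /\ iso_class t = iso_class ((S0, S1, r) : triple m).
Proof.
case/and5P => Hmap /eqP Hn /eqP Hf _ _.
have [p [E0 E1]] := canon Hmap Hf.
set r := (p^-1 * r2 t * p)%g.
have Ht : relabel p t = (S0, S1, r) by rewrite /relabel E0 E1.
exists r; split; last by rewrite -Ht iso_relabel.
move: (Hmap) => /and5P [_ _ /andP [/eqP i2 /forallP f2] /eqP c02 /andP [/forallP f02 _]].
have k2 y : r2 t (r2 t y) = y by rewrite -permM i2 perm1.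
have c y : r2 t (r0 t y) = r0 t (r2 t y) by rewrite -!permM c02.
rewrite inE; apply/andP; split.
  rewrite /HBb -E0; apply/and4P; split; apply/forallP => x; rewrite /r !cj ?permK.
  - by rewrite k2 permKV.
  - by rewrite -{2}(permKV p x) (inj_eq perm_inj).
  - by rewrite c.
  - rewrite -{2}(permKV p x) (inj_eq perm_inj); have := f02 (p^-1 x)%g; by rewrite permM.
have := nvert_relabel p t; rewrite Ht Hn /nvert /r1 /r2 /= => ->; done.
Qed.

Lemma count_bound : n + h = m.+1 -> umap_count_edges m n h <= 3 ^ (m.*2) * N.+1 ^ h.
Proof.
move=> hnh.
apply: leq_trans (_ : _ <= #|[set iso_class ((S0, S1, r) : triple m) | r in Cset]|) _.
  apply: subset_leq_card; apply/subsetP => c /imsetP [t ht ->].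
  rewrite inE in ht; have [r [hr ->]] := canon_triple ht.
  by apply/imsetP; exists r.
apply: leq_trans (leq_imset_card _ _) _.
exact: partB_bound.
Qed.

Lemma count_zero : n + h != m.+1 -> umap_count_edges m n h = 0.
Proof.
move=> hne; apply/eqP; rewrite cards_eq0; apply/eqP/setP => c; rewrite inE.
apply/negbTE/negP => /imsetP [t ht _]; rewrite inE in ht.
by move: hne; rewrite (umap_m ht) eqxx.
Qed.

End Count.

Lemma sum_pick a b M B : \sum_(a <= i < b) (if i == M then B else 0) <= B.
Proof.
elim: b => [|b IH]; first by rewrite big_geq.
case: (leqP a b) => hab; last by rewrite big_geq.
rewrite big_nat_recr //=; case: eqP => [E|_]; last by rewrite addn0.
rewrite big_nat big1 // => i /andP [_ hi].
by case: eqP => // E'; move: hi; rewrite E' E ltnn.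
Qed.

Lemma nat_bound n h : 1 <= n ->
  UMap_card n h <= 1 + 3 ^ ((n + h).-1.*2) * (4 * (n + h).-1).+1 ^ h.
Proof.
move=> hn; rewrite /UMap_card.
set M := (n + h).-1.
apply: leq_add; first by case: (_ && _).
apply: leq_trans (sum_pick 1 (n + h).+1 M (3 ^ (M.*2) * (4 * M).+1 ^ h)).
rewrite !big_nat; apply: leq_sum => i /andP [hi _].
case: i hi => // m' _.
case: (eqVneq (n + h) m'.+2) => E.
  have -> : m'.+1 == M by rewrite /M E.
  by rewrite /M E /=; apply: count_bound.
by rewrite count_zero.
Qed.

Section RealPart.
Local Open Scope R_scope.

Lemma exp_pow_nat x k : exp x ^ k = exp (INR k * x).
Proof.
induction k as [|k IH].
- simpl; rewrite Rmult_0_l exp_0; reflexivity.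
- replace (exp x ^ S k) with (exp x * exp x ^ k) by reflexivity.
  rewrite IH -exp_plus S_INR; f_equal; ring.
Qed.

Lemma exp_ge1 x : 0 <= x -> 1 <= exp x.
Proof. intro hx; generalize (exp_ineq1_le x); lra. Qed.

Lemma Kh_bound n h : (1 <= h)%coq_nat -> INR (n + h)%coq_nat ^ h <= exp (INR n) * INR h ^ h.
Proof.
intro hh.
assert (Hp : 0 < INR h) by (apply lt_0_INR; lia).
assert (E : INR (n + h)%coq_nat = INR h * (1 + INR n / INR h)).
{ rewrite plus_INR; field; lra. }
rewrite E Rpow_mult_distr (Rmult_comm (exp (INR n))).
apply Rmult_le_compat_l.
- apply pow_le; lra.
- replace (exp (INR n)) with (exp (INR n / INR h) ^ h).
  + apply pow_incr; split.
    * assert (0 <= INR n / INR h) by (unfold Rdiv; apply Rmult_le_pos; [apply pos_INR | left; apply Rinv_0_lt_compat; lra]); lra.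
    * apply exp_ineq1_le.
  + rewrite exp_pow_nat; f_equal; field; lra.
Qed.

Lemma hh_ge1 h : 1 <= INR h ^ h.
Proof.
destruct h as [|h]; [simpl; lra|].
apply pow_R1_Rle; rewrite S_INR; generalize (pos_INR h); lra.
Qed.

Lemma real_main (n h U : nat) : (1 <= n)%coq_nat ->
  (U <= 1 + Nat.pow 3 (2 * (n + h - 1)) * Nat.pow (4 * (n + h - 1) + 1) h)%coq_nat ->
  INR U <= (2 ^ 7 * exp (3 / 2)) ^ (n + h)%coq_nat * INR h ^ h.
Proof.
intros hn hU.
set K := (n + h)%coq_nat. set M := (K - 1)%coq_nat.
fold K in hU. fold M in hU.
set e := exp 1.
assert (he : 1 <= e) by (apply exp_ge1; lra).
assert (hK : (1 <= K)%coq_nat) by (unfold K; lia).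
apply le_INR in hU.
rewrite plus_INR mult_INR !pow_INR in hU.
assert (A1 : INR 3 ^ (2 * M)%coq_nat <= 9 ^ K).
{ rewrite pow_sqr. replace (INR 3 * INR 3) with 9 by (simpl; ring).
  apply Rle_pow; [lra | unfold M; lia]. }
assert (A2 : INR (4 * M + 1)%coq_nat ^ h <= 4 ^ h * INR K ^ h).
{ rewrite -Rpow_mult_distr. apply pow_incr; split; [apply pos_INR|].
  replace (4 * INR K) with (INR (4 * K)%coq_nat) by (rewrite mult_INR; simpl; ring).
  apply le_INR; unfold M; generalize hK; clear; intros; lia. }
assert (A3 : INR K ^ h <= e ^ K * INR h ^ h).
{ destruct h as [|h'].
  - simpl. rewrite Rmult_1_r. apply pow_R1_Rle; exact he.
  - apply Rle_trans with (exp (INR n) * INR (S h') ^ S h').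
    + apply Kh_bound; lia.
    + apply Rmult_le_compat_r; [apply pow_le; apply pos_INR|].
      unfold e; rewrite exp_pow_nat Rmult_1_r.
      destruct (Rle_lt_or_eq_dec (INR n) (INR K)) as [Hl|Hl].
      * apply le_INR; unfold K; lia.
      * apply Rlt_le, exp_increasing; exact Hl.
      * rewrite Hl; lra. }
assert (A4 : 4 ^ h <= 4 ^ K) by (apply Rle_pow; [lra | unfold K; lia]).
assert (P9 : 0 <= 9 ^ K) by (apply pow_le; lra).
assert (P4 : 0 <= 4 ^ h) by (apply pow_le; lra).
assert (PK : 0 <= INR K ^ h) by (apply pow_le; apply pos_INR).
assert (Pe : 0 <= e ^ K) by (apply pow_le; lra).
assert (Hh := hh_ge1 h).
set X := (36 * e) ^ K * INR h ^ h.
assert (B1 : INR 3 ^ (2 * M)%coq_nat * INR (4 * M + 1)%coq_nat ^ h <= X).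
{ unfold X. rewrite Rpow_mult_distr.
  replace 36 with (9 * 4) by ring. rewrite Rpow_mult_distr.
  apply Rle_trans with (9 ^ K * (4 ^ h * INR K ^ h)).
  - apply Rmult_le_compat; try (apply pow_le; apply pos_INR); assumption.
  - apply Rle_trans with (9 ^ K * (4 ^ K * (e ^ K * INR h ^ h))).
    + apply Rmult_le_compat_l; [assumption|].
      apply Rmult_le_compat; try assumption.
    + right; ring. }
assert (X1 : 1 <= X).
{ unfold X. rewrite -(Rmult_1_l 1). apply Rmult_le_compat; try lra.
  apply pow_R1_Rle; lra. }
assert (B2' : 2 * (36 * e) ^ K <= (72 * e) ^ K).
{ replace ((72 * e) ^ K) with (2 ^ K * (36 * e) ^ K)
    by (rewrite -Rpow_mult_distr; f_equal; ring).
  apply Rmult_le_compat_r; [apply pow_le; lra|].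
  replace 2 with (2 ^ 1) at 1 by ring. apply Rle_pow; [lra | exact hK]. }
assert (B2 : 2 * X <= (72 * e) ^ K * INR h ^ h).
{ unfold X. rewrite -Rmult_assoc. apply Rmult_le_compat_r; [lra | exact B2']. }
assert (B3 : (72 * e) ^ K <= (2 ^ 7 * exp (3 / 2)) ^ K).
{ apply pow_incr; split; [lra|].
  assert (e <= exp (3/2)).
  { unfold e. apply Rlt_le, exp_increasing; lra. }
  simpl. lra. }
change (INR 1) with 1 in hU.
have hU2 : INR U <= 1 + INR 3 ^ (2 * M)%coq_nat * INR (4 * M + 1)%coq_nat ^ h by exact hU.
apply Rle_trans with (2 * X); [lra|].
apply Rle_trans with ((72 * e) ^ K * INR h ^ h); [exact B2|].
apply Rmult_le_compat_r; [apply pow_le; apply pos_INR | exact B3].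
Qed.

End RealPart.

Lemma expn_pow a b : a ^ b = Nat.pow a b.
Proof. by elim: b => [|b IH] //; rewrite expnS IH -multE. Qed.

Theorem lemma10 (n h : nat) :
  (1 <= n)%N -> ~~ odd h ->
  Rle (INR (UMap_card n h))
      (Rmult (pow (Rmult (pow 2 7) (exp (Rdiv 3 2))) (n + h)%N) (pow (INR h) h)).
Proof.
move=> hn _.
apply: real_main; first by apply/leP.
have H := nat_bound h hn.
have e1 : (n + h).-1.*2 = (2 * (n + h - 1))%coq_nat by lia.
have e2 : (4 * (n + h).-1).+1 = (4 * (n + h - 1) + 1)%coq_nat by lia.
move: H; rewrite e1 e2 !expn_pow -multE -plusE => /leP; done.
Qed.
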